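(* Fix $\alpha>1$, $R>0$, $T>1$ and $\beta,\delta,\mu>0$ with $K_{max}:=\min\big(\frac T4,\frac1{3\mu},\frac{3\beta}{2\mu}\big)>10$. For $\rho_r>0$ let $\Theta(\rho_r)=(\alpha,\rho_r,\beta\rho_r,\delta\rho_r,\mu\rho_r,T)$. Consider the set $I$ of $\rho_r>0$ satisfying $$\rho_r>\frac{\alpha}{2\delta},\qquad \rho_r>\frac{3\alpha}{4(1+\beta)^2R}g^2\Big(\frac{4R}{3K_{max}}\Big),\qquad \rho_r<\frac{\alpha}{(1+\beta)^2}\frac{g^2(R)}{R}.$$ Then on $I$, both $K'_{csi}(R,\Theta(\rho_r))$ and $M'_{csi}(R,\Theta(\rho_r))$ increase monotonically as $\rho_r$ decreases.
   Context: $g(x)=\sqrt{\frac{x}{2^x-1}}\big(2^x x\ln2-2^x+1\big)$, $x>0$. For $\Theta=(\alpha,\rho_r,\rho_d,\rho_s,\rho_0,T)$ and real $M>K\ge1$, $\frac{1}{\zeta_{csi}(M,K,R,\Theta)}=\frac1R\big[\frac{\alpha K}{M-K}(2^{R/K}-1)+M\rho_r+K\rho_d+\rho_s\big]$. $(M'_{csi}(R,\Theta),K'_{csi}(R,\Theta))$ denotes the maximizer (which exists and is unique) of $\zeta_{csi}(M,K,R,\Theta)$ over real $(M,K)$ with $1\le K\le\min\big(\frac T4,\frac{\rho_r}{3\rho_0},\frac{3\rho_d}{2\rho_0}\big)$, $M>K$. *)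

(* Defs.v *)
From Stdlib Require Import Reals Lra.
Open Scope R_scope.

Definition pow2 (x : R) : R := Rpower 2 x.

Definition g (x : R) : R :=
  sqrt (x / (pow2 x - 1)) * (pow2 x * x * ln 2 - pow2 x + 1).

Record Theta := mkTheta {
  th_alpha : R; th_rho_r : R; th_rho_d : R; th_rho_s : R; th_rho_0 : R; th_T : R }.

Definition inv_zeta_csi (M K Rr : R) (th : Theta) : R :=
  / Rr * (th_alpha th * K / (M - K) * (pow2 (Rr / K) - 1)
          + M * th_rho_r th + K * th_rho_d th + th_rho_s th).

Definition zeta_csi (M K Rr : R) (th : Theta) : R := / inv_zeta_csi M K Rr th.

Definition Kbound (th : Theta) : R :=
  Rmin (th_T th / 4) (Rmin (th_rho_r th / (3 * th_rho_0 th))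
                           (3 * th_rho_d th / (2 * th_rho_0 th))).

Definition csi_feasible (M K : R) (th : Theta) : Prop :=
  1 <= K <= Kbound th /\ M > K.

(* (M,K) is the maximizer (M'_csi(R,Theta), K'_csi(R,Theta)) of zeta_csi *)
Definition is_csi_maximizer (Rr : R) (th : Theta) (M K : R) : Prop :=
  csi_feasible M K th /\
  forall M0 K0, csi_feasible M0 K0 th -> zeta_csi M0 K0 Rr th <= zeta_csi M K Rr th.

Definition Theta_of (alpha beta delta mu T rho_r : R) : Theta :=
  mkTheta alpha rho_r (beta * rho_r) (delta * rho_r) (mu * rho_r) T.

Definition Kmax (T beta mu : R) : R :=
  Rmin (T / 4) (Rmin (1 / (3 * mu)) (3 * beta / (2 * mu))).

Definition in_I (alpha beta delta mu T Rr rho_r : R) : Prop :=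
  rho_r > 0 /\
  rho_r > alpha / (2 * delta) /\
  rho_r > 3 * alpha / (4 * (1 + beta) ^ 2 * Rr) * (g (4 * Rr / (3 * Kmax T beta mu))) ^ 2 /\
  rho_r < alpha / (1 + beta) ^ 2 * ((g Rr) ^ 2 / Rr).

(* Main.v *)
Require Import Defs.
From Stdlib Require Import Reals Lra.
From Coquelicot Require Import Coquelicot.
Open Scope R_scope.

Definition psi (Rr K : R) := K * (exp (Rr / K * ln 2) - 1).
Definition J (alpha beta Rr rho K : R) := 2 * sqrt (alpha * psi Rr K / rho) + (1 + beta) * K.
Definition ff (alpha beta delta Rr rho M K : R) :=
  alpha * psi Rr K / (M - K) + M * rho + K * (beta * rho) + delta * rho.

Lemma ln2_pos : 0 < ln 2.
Proof. pose proof ln_lt_2; lra. Qed.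

Lemma psi_pos Rr K : 0 < Rr -> 0 < K -> 0 < psi Rr K.
Proof.
  intros HR HK. unfold psi. pose proof ln2_pos.
  assert (0 < Rr / K * ln 2) by (apply Rmult_lt_0_compat; [apply Rdiv_lt_0_compat|]; lra).
  pose proof (exp_ineq1 (Rr / K * ln 2) ltac:(lra)). apply Rmult_lt_0_compat; lra.
Qed.

Lemma Kbound_eq alpha beta delta mu T rho : 0 < mu -> 0 < rho ->
  Kbound (Theta_of alpha beta delta mu T rho) = Kmax T beta mu.
Proof.
  intros Hm Hr. unfold Kbound, Kmax, Theta_of; simpl.
  replace (rho / (3 * (mu * rho))) with (1 / (3 * mu)) by (field; lra).
  replace (3 * (beta * rho) / (2 * (mu * rho))) with (3 * beta / (2 * mu)) by (field; lra).
  reflexivity.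
Qed.

Lemma inv_zeta_eq alpha beta delta mu T Rr rho M K : 0 < Rr -> K > 0 -> M > K ->
  inv_zeta_csi M K Rr (Theta_of alpha beta delta mu T rho) = / Rr * ff alpha beta delta Rr rho M K.
Proof.
  intros HR HK HM. unfold inv_zeta_csi, ff, Theta_of, psi, Defs.pow2, Rpower; simpl.
  unfold Rdiv; ring.
Qed.

Lemma ff_pos alpha beta delta Rr rho M K : 0 < alpha -> 0 < beta -> 0 < delta -> 0 < Rr -> 0 < rho ->
  K > 0 -> M > K -> 0 < ff alpha beta delta Rr rho M K.
Proof.
  intros. unfold ff. pose proof (psi_pos Rr K ltac:(lra) ltac:(lra)).
  assert (0 < alpha * psi Rr K / (M - K)) by (apply Rdiv_lt_0_compat; [apply Rmult_lt_0_compat|]; lra).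
  assert (0 < M * rho) by (apply Rmult_lt_0_compat; lra).
  assert (0 < K * (beta * rho)) by (apply Rmult_lt_0_compat; [|apply Rmult_lt_0_compat]; lra).
  assert (0 < delta * rho) by (apply Rmult_lt_0_compat; lra).
  lra.
Qed.

Lemma maxim_char alpha beta delta mu T Rr rho M K :
  0 < alpha -> 0 < beta -> 0 < delta -> 0 < mu -> 0 < Rr -> 0 < rho ->
  is_csi_maximizer Rr (Theta_of alpha beta delta mu T rho) M K ->
  (1 <= K <= Kmax T beta mu) /\ M > K /\ rho * (M - K)^2 = alpha * psi Rr K /\
  M - K = sqrt (alpha * psi Rr K / rho) /\
  forall K', 1 <= K' <= Kmax T beta mu -> J alpha beta Rr rho K <= J alpha beta Rr rho K'.
Proof.
  intros Ha Hb Hd Hm HR Hr [[HK HMK] Hmax].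
  unfold csi_feasible in *. rewrite Kbound_eq in HK, Hmax by lra.
  assert (key : forall M0 K0, 1 <= K0 <= Kmax T beta mu -> M0 > K0 ->
     ff alpha beta delta Rr rho M K <= ff alpha beta delta Rr rho M0 K0).
  { intros M0 K0 HK0 HM0. specialize (Hmax M0 K0 (conj HK0 HM0)).
    unfold zeta_csi in Hmax. rewrite !inv_zeta_eq in Hmax by lra.
    pose proof (ff_pos alpha beta delta Rr rho M K ltac:(lra) ltac:(lra) ltac:(lra) ltac:(lra) ltac:(lra) ltac:(lra) ltac:(lra)) as P1.
    pose proof (ff_pos alpha beta delta Rr rho M0 K0 ltac:(lra) ltac:(lra) ltac:(lra) ltac:(lra) ltac:(lra) ltac:(lra) ltac:(lra)) as P2.
    set (a := ff alpha beta delta Rr rho M K) in *.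
    set (b := ff alpha beta delta Rr rho M0 K0) in *.
    assert (0 < / Rr) by (apply Rinv_0_lt_compat; lra).
    assert (Pa : 0 < / Rr * a) by (apply Rmult_lt_0_compat; lra).
    assert (Pb : 0 < / Rr * b) by (apply Rmult_lt_0_compat; lra).
    assert (H2 : / Rr * a <= / Rr * b).
    { replace (/ Rr * a) with (/ / (/ Rr * a)) by (field; lra).
      replace (/ Rr * b) with (/ / (/ Rr * b)) by (field; lra).
      apply Rinv_le_contravar; auto. apply Rinv_0_lt_compat; auto. }
    apply Rmult_le_reg_l with (/ Rr); auto. }
  assert (Hsq : forall K0, 1 <= K0 -> 0 < sqrt (alpha * psi Rr K0 / rho) /\
     sqrt (alpha * psi Rr K0 / rho) ^ 2 = alpha * psi Rr K0 / rho).
  { intros K0 HK0. pose proof (psi_pos Rr K0 ltac:(lra) ltac:(lra)).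
    assert (0 < alpha * psi Rr K0 / rho) by (apply Rdiv_lt_0_compat; [apply Rmult_lt_0_compat|]; lra).
    split. apply sqrt_lt_R0; auto. rewrite <- Rsqr_pow2. apply Rsqr_sqrt. lra. }
  assert (Hfs : forall K0, 1 <= K0 ->
     ff alpha beta delta Rr rho (K0 + sqrt (alpha * psi Rr K0 / rho)) K0 =
     rho * J alpha beta Rr rho K0 + delta * rho).
  { intros K0 HK0. destruct (Hsq K0 HK0) as [s1 s2]. unfold ff, J.
    set (s := sqrt (alpha * psi Rr K0 / rho)) in *.
    replace (K0 + s - K0) with s by ring.
    assert (alpha * psi Rr K0 = rho * s^2) by (rewrite s2; field; lra).
    rewrite H. field. lra. }
  assert (Hm_eq : M - K = sqrt (alpha * psi Rr K / rho)).
  { destruct (Hsq K (proj1 HK)) as [s1 s2].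
    pose proof (key (K + sqrt (alpha * psi Rr K / rho)) K HK ltac:(lra)) as k1.
    unfold ff in k1.
    set (s := sqrt (alpha * psi Rr K / rho)) in *.
    replace (K + s - K) with s in k1 by ring.
    assert (E1 : alpha * psi Rr K = rho * s^2) by (rewrite s2; field; lra).
    rewrite E1 in k1.
    set (m := M - K) in *.
    assert (M = K + m) by (unfold m; ring).
    rewrite H in k1.
    assert (k2 : rho * s ^ 2 / m + m * rho <= rho * s^2 / s + s * rho) by lra.
    assert (k3 : rho * s^2 + m * m * rho <= 2 * s * rho * m).
    { replace (rho * s ^ 2 / s + s * rho) with (2 * s * rho) in k2 by (field; lra).
      apply Rmult_le_compat_r with (r := m) in k2; [|unfold m; lra].
      replace ((rho * s ^ 2 / m + m * rho) * m) with (rho * s^2 + m * m * rho) in k2 by (field; unfold m; lra).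
      lra. }
    assert (rho * (m - s)^2 <= 0) by nra.
    assert ((m - s)^2 = 0) by (pose proof (pow2_ge_0 (m - s)); nra).
    assert (m - s = 0) by (apply Rsqr_0_uniq; unfold Rsqr; simpl in H1; lra). lra. }
  split; [auto|]. split; [auto|]. split.
  { rewrite Hm_eq. destruct (Hsq K (proj1 HK)) as [_ ->]. field. lra. }
  split; [auto|].
  intros K' HK'. pose proof (key (K' + sqrt (alpha * psi Rr K' / rho)) K' HK'
     ltac:(destruct (Hsq K' (proj1 HK')); lra)) as k.
  rewrite Hfs in k by lra.
  assert (M = K + sqrt (alpha * psi Rr K / rho)) by lra. rewrite H, Hfs in k by lra.
  apply Rmult_le_reg_l with rho; auto. lra.
Qed.
Lemma V_pos t : 0 < t -> 0 < t * exp t - exp t + 1.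
Proof.
  intro Ht. pose proof (exp_ineq1 (- t) ltac:(lra)) as H. rewrite exp_Ropp in H.
  pose proof (exp_pos t) as E. assert (Hi : exp t * / exp t = 1) by (field; lra).
  nra.
Qed.

Definition pp (t : R) := exp t * exp t * (2*t - 1) + exp t * (2 - 2*t - t*t) - 1.

Lemma pp_pos t : 0 < t -> 0 < pp t.
Proof.
  intro Ht.
  destruct (MVT_cor2 pp (fun c => c * exp c * (4 * exp c - 4 - c)) 0 t Ht) as [c [Hc Hc2]].
  { intros c _. apply is_derive_Reals. unfold pp. auto_derive; auto. ring. }
  assert (H0 : pp 0 = 0) by (unfold pp; rewrite exp_0; ring).
  rewrite H0 in Hc.
  pose proof (exp_ineq1 c ltac:(lra)) as Ec. pose proof (exp_pos c) as Ep.
  assert (0 < c * exp c * (4 * exp c - 4 - c)).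
  { apply Rmult_lt_0_compat. nra. lra. }
  nra.
Qed.

Definition qq (t : R) := (exp t - 1) / (t * (t * exp t - exp t + 1)).

Lemma qq_decr t1 t2 : 0 < t1 -> t1 < t2 -> qq t2 < qq t1.
Proof.
  intros H1 H2.
  destruct (MVT_cor2 qq (fun c => - pp c / (c * (c * exp c - exp c + 1))^2) t1 t2 H2) as [c [Hc Hc2]].
  { intros c Hc. pose proof (V_pos c ltac:(lra)) as V. apply is_derive_Reals. unfold qq.
    auto_derive.
    - apply Rgt_not_eq. apply Rmult_lt_0_compat; lra.
    - unfold pp. field. split; apply Rgt_not_eq; lra. }
  pose proof (V_pos c ltac:(lra)) as V. pose proof (pp_pos c ltac:(lra)) as P.
  assert (0 < pp c / (c * (c * exp c - exp c + 1))^2).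
  { apply Rdiv_lt_0_compat; auto. apply pow_lt. apply Rmult_lt_0_compat; lra. }
  nra.
Qed.
Lemma locmin_left G c l e : derivable_pt_lim G c l -> 0 < e ->
  (forall x, c - e < x < c -> G c <= G x) -> l <= 0.
Proof.
  intros D He Hm. destruct (Rle_or_lt l 0) as [|Hl]; auto.
  destruct (D (l/2) ltac:(lra)) as [d Hd].
  pose (h := - Rmin d e / 2).
  assert (Hmin : 0 < Rmin d e) by (apply Rmin_pos; [apply cond_pos|lra]).
  assert (Hh : h < 0) by (unfold h; lra).
  assert (Hle : Rmin d e <= d) by apply Rmin_l.
  assert (Hle2 : Rmin d e <= e) by apply Rmin_r.
  specialize (Hd h ltac:(lra)).
  assert (Habs : Rabs h < d) by (rewrite Rabs_left; unfold h; lra).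
  specialize (Hd Habs).
  specialize (Hm (c + h) ltac:(unfold h; lra)).
  apply Rabs_def2 in Hd. destruct Hd as [Hd1 Hd2].
  assert (Q : (G (c + h) - G c) / h <= 0).
  { unfold Rdiv. replace ((G (c + h) - G c) * / h) with (- (G (c + h) - G c) * / (- h)) by (field; lra).
    assert (0 < / - h) by (apply Rinv_0_lt_compat; lra). nra. }
  lra.
Qed.

Lemma locmin_right G c l e : derivable_pt_lim G c l -> 0 < e ->
  (forall x, c < x < c + e -> G c <= G x) -> 0 <= l.
Proof.
  intros D He Hm. destruct (Rle_or_lt 0 l) as [|Hl]; auto.
  destruct (D (- l/2) ltac:(lra)) as [d Hd].
  pose (h := Rmin d e / 2).
  assert (Hmin : 0 < Rmin d e) by (apply Rmin_pos; [apply cond_pos|lra]).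
  assert (Hh : 0 < h) by (unfold h; lra).
  assert (Hle : Rmin d e <= d) by apply Rmin_l.
  assert (Hle2 : Rmin d e <= e) by apply Rmin_r.
  specialize (Hd h ltac:(lra)).
  assert (Habs : Rabs h < d) by (rewrite Rabs_right; unfold h; lra).
  specialize (Hd Habs).
  specialize (Hm (c + h) ltac:(unfold h; lra)).
  apply Rabs_def2 in Hd. destruct Hd as [Hd1 Hd2].
  assert (Q : 0 <= (G (c + h) - G c) / h).
  { unfold Rdiv. assert (0 < / h) by (apply Rinv_0_lt_compat; lra). nra. }
  lra.
Qed.

Lemma J_deriv alpha beta Rr rho K : 0 < alpha -> 0 < Rr -> 0 < rho -> 0 < K ->
  derivable_pt_lim (J alpha beta Rr rho) K
    (- alpha * (Rr / K * ln 2 * exp (Rr / K * ln 2) - exp (Rr / K * ln 2) + 1)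
        / (rho * sqrt (alpha * psi Rr K / rho)) + (1 + beta)).
Proof.
  intros Ha HR Hr HK. pose proof (psi_pos Rr K HR HK) as Pp.
  assert (Q : 0 < alpha * psi Rr K / rho) by (apply Rdiv_lt_0_compat; [apply Rmult_lt_0_compat|]; lra).
  pose proof (sqrt_lt_R0 _ Q) as Sq.
  apply is_derive_Reals. unfold J. unfold psi in *.
  auto_derive.
  - repeat split; try lra.
  - unfold Rdiv, Rminus in *. set (E := exp (Rr * / K * ln 2)) in *.
    set (S := sqrt (alpha * (K * (E + - 1)) * / rho)) in *.
    field. repeat split; lra.
Qed.

Theorem theorem6 (alpha Rr T beta delta mu : R) :
  alpha > 1 -> Rr > 0 -> T > 1 -> beta > 0 -> delta > 0 -> mu > 0 ->
  Kmax T beta mu > 10 ->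
  forall rho1 rho2 M1 K1 M2 K2 : R,
    in_I alpha beta delta mu T Rr rho1 ->
    in_I alpha beta delta mu T Rr rho2 ->
    rho1 < rho2 ->
    is_csi_maximizer Rr (Theta_of alpha beta delta mu T rho1) M1 K1 ->
    is_csi_maximizer Rr (Theta_of alpha beta delta mu T rho2) M2 K2 ->
    K2 <= K1 /\ M2 <= M1.
Proof.
  intros Ha HR HT Hb Hd Hmu HK rho1 rho2 M1 K1 M2 K2 I1 I2 Hlt C1 C2.
  assert (r1 : 0 < rho1) by (destruct I1; lra).
  assert (r2 : 0 < rho2) by (destruct I2; lra).
  destruct (maxim_char alpha beta delta mu T Rr rho1 M1 K1 ltac:(lra) ltac:(lra) ltac:(lra) ltac:(lra) ltac:(lra) r1 C1)
    as [B1 [F1 [Q1 [S1 Min1]]]].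
  destruct (maxim_char alpha beta delta mu T Rr rho2 M2 K2 ltac:(lra) ltac:(lra) ltac:(lra) ltac:(lra) ltac:(lra) r2 C2)
    as [B2 [F2 [Q2 [S2 Min2]]]].
  assert (HKK : K2 <= K1).
  { pose proof (Min1 K2 B2) as e1. pose proof (Min2 K1 B1) as e2.
    unfold J in e1, e2. rewrite !sqrt_div_alt in e1, e2 by lra.
    pose proof (sqrt_lt_R0 _ r1) as w1. pose proof (sqrt_lt_R0 _ r2) as w2.
    pose proof (sqrt_lt_1_alt rho1 rho2 (conj (Rlt_le _ _ r1) Hlt)) as w12.
    set (A1 := sqrt (alpha * psi Rr K1)) in *. set (A2 := sqrt (alpha * psi Rr K2)) in *.
    set (u1 := / sqrt rho1). set (u2 := / sqrt rho2).
    assert (U : 0 < u2 < u1).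
    { unfold u1, u2. split. apply Rinv_0_lt_compat; lra. apply Rinv_lt_contravar; nra. }
    unfold Rdiv in e1, e2. fold u1 in e1. fold u2 in e2.
    destruct (Rle_or_lt A1 A2) as [X|X];
      [|exfalso; pose proof (Rmult_lt_0_compat (A1-A2) (u1-u2) ltac:(lra) ltac:(lra)); nra].
    pose proof (Rmult_le_pos u2 (A2 - A1) ltac:(lra) ltac:(lra)).
    assert (0 <= (1 + beta) * (K1 - K2)) by nra.
    nra. }
  split; auto.
  destruct (Req_dec K1 K2) as [Eq|Ne].
  { subst K2. set (m1 := M1 - K1) in *. set (m2 := M2 - K1) in *.
    assert (m2 <= m1).
    { destruct (Rle_or_lt m2 m1) as [X|X]; auto. exfalso.
      assert (0 < m1) by (unfold m1; lra).
      assert (m1 * m1 < m2 * m2) by nra.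
      assert (rho1 * (m1 * m1) < rho2 * (m2 * m2)) by nra.
      simpl in Q1, Q2. nra. } unfold m1, m2 in *. lra. }
  assert (Hlt2 : K2 < K1) by lra.
  set (t1 := Rr / K1 * ln 2). set (t2 := Rr / K2 * ln 2).
  pose proof ln2_pos as L2.
  assert (T1 : 0 < t1) by (unfold t1; apply Rmult_lt_0_compat; [apply Rdiv_lt_0_compat|]; lra).
  assert (T12 : t1 < t2).
  { unfold t1, t2. apply Rmult_lt_compat_r; auto. unfold Rdiv. apply Rmult_lt_compat_l; auto.
    apply Rinv_lt_contravar; nra. }
  pose proof (qq_decr t1 t2 T1 T12) as Qd.
  pose proof (V_pos t1 T1) as V1. pose proof (V_pos t2 ltac:(lra)) as V2.
  pose proof (J_deriv alpha beta Rr rho1 K1 ltac:(lra) HR r1 ltac:(lra)) as D1.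
  pose proof (J_deriv alpha beta Rr rho2 K2 ltac:(lra) HR r2 ltac:(lra)) as D2.
  apply locmin_left with (e := K1 - 1) in D1;
    [| lra | intros x Hx; apply Min1; lra].
  apply locmin_right with (e := Kmax T beta mu - K2) in D2;
    [| lra | intros x Hx; apply Min2; lra].
  rewrite <- S1 in D1. rewrite <- S2 in D2. fold t1 in D1. fold t2 in D2.
  set (m1 := M1 - K1) in *. set (m2 := M2 - K2) in *.
  assert (pm1 : 0 < m1) by (unfold m1; lra). assert (pm2 : 0 < m2) by (unfold m2; lra).
  set (W1 := t1 * exp t1 - exp t1 + 1) in *. set (W2 := t2 * exp t2 - exp t2 + 1) in *.
  set (c := Rr * ln 2).
  assert (P1 : psi Rr K1 = c * W1 * qq t1).
  { assert (Kt : K1 * t1 = c) by (unfold t1, c; field; lra).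
    unfold psi, qq. fold t1. fold W1. rewrite <- Kt. field; split; lra. }
  assert (P2 : psi Rr K2 = c * W2 * qq t2).
  { assert (Kt : K2 * t2 = c) by (unfold t2, c; field; lra).
    unfold psi, qq. fold t2. fold W2. rewrite <- Kt. field; split; lra. }
  assert (H1 : (1 + beta) * rho1 * m1 <= alpha * W1).
  { assert (0 < rho1 * m1) by (apply Rmult_lt_0_compat; unfold m1; lra).
    apply Rmult_le_compat_r with (r := rho1 * m1) in D1; [|lra].
    replace ((- alpha * W1 / (rho1 * m1) + (1 + beta)) * (rho1 * m1)) with
      (- alpha * W1 + (1 + beta) * rho1 * m1) in D1 by (field; repeat split; lra). lra. }
  assert (H2 : alpha * W2 <= (1 + beta) * rho2 * m2).
  { assert (0 < rho2 * m2) by (apply Rmult_lt_0_compat; unfold m2; lra).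
    apply Rmult_le_compat_r with (r := rho2 * m2) in D2; [|lra].
    replace ((- alpha * W2 / (rho2 * m2) + (1 + beta)) * (rho2 * m2)) with
      (- alpha * W2 + (1 + beta) * rho2 * m2) in D2 by (field; repeat split; lra). lra. }
  assert (G1 : (1 + beta) * c * qq t1 <= m1).
  { assert (E1 : rho1 * m1^2 = alpha * (c * W1 * qq t1)) by (rewrite <- P1; exact Q1).
    assert (X : (1 + beta) * rho1 * m1 * m1 <= alpha * W1 * m1) by (apply Rmult_le_compat_r; lra).
    apply Rmult_le_reg_l with (alpha * W1). apply Rmult_lt_0_compat; lra.
    simpl in E1. nra. }
  assert (G2 : m2 <= (1 + beta) * c * qq t2).
  { assert (E2 : rho2 * m2^2 = alpha * (c * W2 * qq t2)) by (rewrite <- P2; exact Q2).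
    assert (X : alpha * W2 * m2 <= (1 + beta) * rho2 * m2 * m2) by (apply Rmult_le_compat_r; lra).
    apply Rmult_le_reg_l with (alpha * W2). apply Rmult_lt_0_compat; lra.
    simpl in E2. nra. }
  assert (0 < c) by (unfold c; apply Rmult_lt_0_compat; lra).
  assert ((1 + beta) * c * qq t2 <= (1 + beta) * c * qq t1).
  { apply Rmult_le_compat_l; [|lra]. apply Rmult_le_pos; lra. }
  unfold m1, m2 in *. lra.
Qed.
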